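(* Let $A$ be the $N\times N$ tridiagonal matrix described below, block partitioned as $A = \begin{bmatrix} A_{LL} & A_{LI} \\ A_{IL} & A_{II}\end{bmatrix}$, and let $M = \begin{bmatrix} A_{LL} & A_{LI} \\ A_{IL} & M_{II}\end{bmatrix}$, where $M_{II}$ is the upper triangular part (including the diagonal) of $A_{II}$. Assume that there is a constant, $\alpha$, such that the discretization mesh satisfies $\alpha/N \leq h_i$ for $N_L+1 \leq i \leq N$. Then, any eigenvalue, $\lambda$, of $M^{-1}A$ satisfies \[ 1-\frac{8\varepsilon N}{\underline{C}\alpha} \leq \lambda \leq 1, \] where $\underline{C} > 0$ is the lower bound on $c(x)$.
   Context: Consider $-\varepsilon u'' - c(x)u' + r(x)u = f$ on $(0,1)$, $u(0)=u(1)=0$, with $\varepsilon\in(0,1]$, $0<\underline{C}\le c(x)\le\overline{C}$ and $r(x)\ge 0$ on $[0,1]$. On a mesh $0=x_0<x_1<\dots<x_N=1$ with $h_i = x_i - x_{i-1}$, $\bar h_i = (h_i+h_{i+1})/2$, $c_i=c(x_i)$, $r_i=r(x_i)$, $A$ is the tridiagonal upwind finite-difference matrix whose row $i$ has stencil $\left[ -\frac{\varepsilon}{h_i\bar h_i} , \frac{\varepsilon}{\bar h_i}\left(\frac{1}{h_i} + \frac{1}{h_{i+1}}\right) + \frac{c_i}{h_{i+1}} + r_i , -\frac{\varepsilon}{h_{i+1}\bar h_i} -\frac{c_i}{h_{i+1}} \right]$. The unknowns are split into a layer set $L$ (first $N_L$ indices, fine meshwidths near the layer, including the transition point) and an interior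 set $I$ (remaining $N_I$ indices), with $N=N_L+N_I$. *)

(* Defs.v *)
From HB Require Import structures.
From mathcomp Require Import all_boot all_order all_algebra.
From mathcomp Require Import complex.
Set Implicit Arguments. Unset Strict Implicit. Unset Printing Implicit Defensive.
Import Order.TTheory GRing.Theory Num.Theory.
Local Open Scope ring_scope.

Section Upwind.
Variable R : realFieldType.

Definition meshw (x : nat -> R) (i : nat) : R := x i - x i.-1.
Definition meshwbar (x : nat -> R) (i : nat) : R :=
  (meshw x i + meshw x i.+1) / 2.

(* The upwind finite-difference matrix on the interior nodes x_1 .. x_n
   (mesh x_0 < ... < x_{n+1}); row/column k : 'I_n corresponds to node
   i = k+1.  Row i has stencil
   [ -eps/(h_i hbar_i),
      eps/hbar_i (1/h_i + 1/h_{i+1}) + c_i/h_{i+1} + r_i,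
     -eps/(h_{i+1} hbar_i) - c_i/h_{i+1} ]. *)
Definition upwindA (n : nat) (eps : R) (x : nat -> R) (c r : R -> R)
  : 'M[R]_n :=
  \matrix_(k < n, j < n)
    let i := k.+1 in
    let hi := meshw x i in
    let hi1 := meshw x i.+1 in
    let hb := meshwbar x i in
    if (j : nat) == (k : nat) then
      eps / hb * (hi^-1 + hi1^-1) + c (x i) / hi1 + r (x i)
    else if (j.+1 == (k : nat))%N then - (eps / (hi * hb))
    else if ((j : nat) == k.+1)%N then - (eps / (hi1 * hb)) - c (x i) / hi1
    else 0.

Definition upper_part (m : nat) (B : 'M[R]_m) : 'M[R]_m :=
  \matrix_(i < m, j < m) if (i <= j)%N then B i j else 0.

Definition precM (NL NI : nat) (A : 'M[R]_(NL + NI)) : 'M[R]_(NL + NI) :=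
  block_mx (ulsubmx A) (ursubmx A) (dlsubmx A) (upper_part (drsubmx A)).

End Upwind.

(* Main.v *)
Require Import Defs.
From HB Require Import structures.
From mathcomp Require Import all_boot all_order all_algebra.
From mathcomp Require Import complex.
From mathcomp Require Import lra ring zify.
Import Order.TTheory GRing.Theory Num.Theory.
Local Open Scope ring_scope.
Lemma Lpart (R : realFieldType) (m : nat) (l d u a b : nat -> R) :
 a 0%N = 0 -> b 0%N = 0 ->
 (forall k, (0 < k <= m)%N -> 0 <= l k /\ 0 < u k /\ l k + u k <= d k) ->
 (forall k, (0 < k <= m)%N -> - l k * a k.-1 + d k * a k - u k * a k.+1 = 0 /\
                               - l k * b k.-1 + d k * b k - u k * b k.+1 = 0) ->
 forall k, (k <= m)%N -> a k * b k.+1 - b k * a k.+1 = 0 /\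
   0 <= a k * a k.+1 + b k * b k.+1 <= a k.+1 ^+ 2 + b k.+1 ^+ 2 /\
   a k ^+ 2 + b k ^+ 2 <= a k.+1 ^+ 2 + b k.+1 ^+ 2.
Proof.
move=> a0 b0 Hc Hr; elim=> [|k IH] Hk.
  rewrite a0 b0; split; first by ring.
  split; [apply/andP; split|]; nra.
have /IH [Hi [/andP [Hr0 Hr1] Hn]] := ltnW Hk.
have Hk' : (0 < k.+1 <= m)%N by rewrite Hk.
have [Hl [Hu Hd]] := Hc _ Hk'; have [E1 E2] := Hr _ Hk'; rewrite /= in E1 E2.
move: Hl Hu Hd Hi Hr0 Hr1 Hn E1 E2.
set A0 := a k; set A1 := a k.+1; set A2 := a k.+2.
set B0 := b k; set B1 := b k.+1; set B2 := b k.+2.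
set L := l k.+1; set D := d k.+1; set U := u k.+1.
move=> Hl Hu Hd Hi Hr0 Hr1 Hn E1 E2.
have eA : U * A2 = D * A1 - L * A0 by lra.
have eB : U * B2 = D * B1 - L * B0 by lra.
have Hi' : A1 * B2 - B1 * A2 = 0.
  have : U * (A1 * B2 - B1 * A2) = 0.
    have -> : U * (A1 * B2 - B1 * A2) = A1 * (U * B2) - B1 * (U * A2) by ring.
    rewrite eA eB.
    have -> : A1 * (D * B1 - L * B0) - B1 * (D * A1 - L * A0) = - L * (A1 * B0 - B1 * A0) by ring.
    have -> : A1 * B0 - B1 * A0 = 0 by lra.
    by rewrite mulr0.
  by move/eqP; rewrite mulf_eq0 gt_eqF //= => /eqP.
set S := A1 * A2 + B1 * B2.
set n1 := A1 ^+ 2 + B1 ^+ 2; set n2 := A2 ^+ 2 + B2 ^+ 2.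
have n1ge : 0 <= n1 by rewrite /n1; nra.
have n2ge : 0 <= n2 by rewrite /n2; nra.
have US : U * S = D * n1 - L * (A0 * A1 + B0 * B1).
  have -> : U * S = A1 * (U * A2) + B1 * (U * B2) by rewrite /S; ring.
  by rewrite eA eB /n1; ring.
have Sge : n1 <= S.
  have : U * n1 <= U * S.
    rewrite US.
    have : L * (A0 * A1 + B0 * B1) <= L * n1 by apply: ler_wpM2l.
    have : U * n1 <= (D - L) * n1 by apply: ler_wpM2r => //; lra.
    lra.
  by rewrite ler_pM2l.
have Lag : S ^+ 2 = n1 * n2.
  have : S ^+ 2 + (A1 * B2 - B1 * A2) ^+ 2 = n1 * n2 by rewrite /S /n1 /n2; ring.
  by rewrite Hi' expr0n /= addr0.
have n12 : n1 <= n2.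
  have [->|n1p] := eqVneq n1 0; first by [].
  have n1pos : 0 < n1 by rewrite lt_neqAle eq_sym n1p.
  have : n1 * n1 <= n1 * n2.
    rewrite -Lag; nra.
  by rewrite ler_pM2l.
split => //; split; last by [].
apply/andP; split; first by lra.
have : S ^+ 2 <= n2 ^+ 2 by rewrite Lag; nra.
have S0 : 0 <= S by lra.
nra.
Qed.
Lemma Ipart (R : realFieldType) (NL n : nat) (l d u t a b : nat -> R) (p q s : R) :
 (NL < n)%N -> 0 < s ->
 (forall k, (NL < k <= n)%N -> 0 < t k /\ 0 <= l k /\ 0 < u k /\ l k + u k <= d k) ->
 (forall k, (NL.+1 < k <= n)%N -> t k * l k = t k.-1 * u k.-1 /\ l k <= s ^+ 2 * u k) ->
 a NL * b NL.+1 - b NL * a NL.+1 = 0 ->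
 0 <= a NL * a NL.+1 + b NL * b NL.+1 <= a NL.+1 ^+ 2 + b NL.+1 ^+ 2 ->
 p * (d NL.+1 * a NL.+1 - l NL.+1 * a NL) - q * (d NL.+1 * b NL.+1 - l NL.+1 * b NL)
   = u NL.+1 * a NL.+2 ->
 q * (d NL.+1 * a NL.+1 - l NL.+1 * a NL) + p * (d NL.+1 * b NL.+1 - l NL.+1 * b NL)
   = u NL.+1 * b NL.+2 ->
 (forall k, (NL.+1 < k <= n)%N ->
    p * d k * a k - q * d k * b k = l k * a k.-1 + u k * a k.+1 /\
    q * d k * a k + p * d k * b k = l k * b k.-1 + u k * b k.+1) ->
 forall j, (NL.+1 + j <= n)%N -> exists Y X D : R,
   p * Y = X + t (NL.+1 + j)%N * u (NL.+1 + j)%N *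
       (a (NL.+1 + j)%N * a (NL.+1 + j).+1 + b (NL.+1 + j)%N * b (NL.+1 + j).+1) /\
   q * Y = t (NL.+1 + j)%N * u (NL.+1 + j)%N *
       (a (NL.+1 + j)%N * b (NL.+1 + j).+1 - b (NL.+1 + j)%N * a (NL.+1 + j).+1) /\
   D <= Y /\ 0 <= D /\
   `|X| + s * t (NL.+1 + j)%N * u (NL.+1 + j)%N *
       (a (NL.+1 + j)%N ^+ 2 + b (NL.+1 + j)%N ^+ 2) <= 2 * s * D /\
   (D = 0 -> forall i, (NL < i <= NL.+1 + j)%N -> a i ^+ 2 + b i ^+ 2 = 0).
Proof.
move=> Hn s0 Hc Hc2 Hi0 /andP[Hr0 Hr1] F1 F2 HJ; elim=> [|j IH] Hj.
  rewrite addn0 in Hj *.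
  have Hk : (NL < NL.+1 <= n)%N by rewrite ltnSn.
  have [Ht [Hl [Hu Hd]]] := Hc _ Hk.
  move: Ht Hl Hu Hd Hi0 Hr0 Hr1 F1 F2.
  set A0 := a NL; set A1 := a NL.+1; set A2 := a NL.+2.
  set B0 := b NL; set B1 := b NL.+1; set B2 := b NL.+2.
  set L := l NL.+1; set D := d NL.+1; set U := u NL.+1; set T := t NL.+1.
  move=> Ht Hl Hu Hd Hi0 Hr0 Hr1 F1 F2.
  set n1 := A1 ^+ 2 + B1 ^+ 2.
  set r0 := A0 * A1 + B0 * B1.
  have n1ge : 0 <= n1 by rewrite /n1; nra.
  have coreR : p * (D * n1 - L * r0) = U * (A1 * A2 + B1 * B2).
    have e1 := congr1 (fun z => A1 * z) F1.
    have e2 := congr1 (fun z => B1 * z) F2.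
    have e3 := congr1 (fun z => q * L * z) Hi0.
    rewrite /= in e1 e2 e3; rewrite /n1 /r0; lra.
  have coreI : q * (D * n1 - L * r0) = U * (A1 * B2 - B1 * A2).
    have e1 := congr1 (fun z => B1 * z) F1.
    have e2 := congr1 (fun z => A1 * z) F2.
    have e3 := congr1 (fun z => p * L * z) Hi0.
    rewrite /= in e1 e2 e3; rewrite /n1 /r0; lra.
  exists (T * (D * n1 - L * r0)), 0, (T * (D - L) * n1).
  split; first by rewrite add0r mulrCA coreR mulrA.
  split; first by rewrite mulrCA coreI mulrA.
  have LrL : L * r0 <= L * n1 by apply: ler_wpM2l.
  have TDn : 0 <= (D - L) * n1 by apply: mulr_ge0 => //; lra.
  split; first by rewrite -mulrA ler_pM2l //; lra.
  split; first by rewrite -mulrA mulr_ge0 // ltW.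
  split.
    rewrite normr0 add0r.
    have : U * n1 <= (D - L) * n1 by apply: ler_wpM2r => //; lra.
    move=> h; have : s * T * (U * n1) <= s * T * ((D - L) * n1).
      by apply: ler_wpM2l => //; apply: mulr_ge0; apply: ltW.
    have -> : s * T * U * n1 = s * T * (U * n1) by ring.
    have -> : 2 * s * (T * (D - L) * n1) = 2 * (s * T * ((D - L) * n1)) by ring.
    have : 0 <= s * T * ((D - L) * n1) by apply: mulr_ge0 => //; apply: mulr_ge0; apply: ltW.
    lra.
  move=> D0 i /andP[Hi1 Hi2].
  have -> : i = NL.+1 by apply/eqP; rewrite eqn_leq Hi2 Hi1.
  have DL : 0 < D - L by lra.
  move/eqP: D0; rewrite -mulrA mulf_eq0 gt_eqF //= mulf_eq0 gt_eqF //= => /eqP.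
  done.
have Hj' : (NL.+1 + j <= n)%N by apply: ltnW; rewrite -addnS.
have [Y [X [Dv [EY [EI [DY [D0 [HB HZ]]]]]]]] := IH Hj'.
rewrite addnS in Hj *.
move: EY EI HB HZ Hj.
set k := (NL.+1 + j)%N => EY EI HB HZ Hj.
have Hk : (NL < k <= n)%N by rewrite /k; lia.
have Hk' : (NL < k.+1 <= n)%N by rewrite /k; lia.
have Hk2 : (NL.+1 < k.+1 <= n)%N by rewrite /k; lia.


have [Ht [Hl [Hu Hd]]] := Hc _ Hk.
have [Ht' [Hl' [Hu' Hd']]] := Hc _ Hk'.
have [Hsym Hbeta] := Hc2 _ Hk2.
have [J1 J2] := HJ _ Hk2.
rewrite /= in Hsym J1 J2.
move: Ht Hl Hu Hd Ht' Hl' Hu' Hd' Hsym Hbeta J1 J2 EY EI HB HZ.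
set A0 := a k; set A1 := a k.+1; set A2 := a k.+2.
set B0 := b k; set B1 := b k.+1; set B2 := b k.+2.
set L := l k.+1; set D := d k.+1; set U := u k.+1; set T := t k.+1.
set L0 := l k; set D0' := d k; set U0 := u k; set T0 := t k.
move=> Ht Hl Hu Hd Ht' Hl' Hu' Hd' Hsym Hbeta J1 J2 EY EI HB HZ.
set n0 := A0 ^+ 2 + B0 ^+ 2.
set n1 := A1 ^+ 2 + B1 ^+ 2.
set r0 := A0 * A1 + B0 * B1.
set i0 := A0 * B1 - B0 * A1.
have n0ge : 0 <= n0 by rewrite /n0; nra.
have n1ge : 0 <= n1 by rewrite /n1; nra.
have coreR : p * D * n1 = L * r0 + U * (A1 * A2 + B1 * B2).
  have e1 := congr1 (fun z => A1 * z) J1.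
  have e2 := congr1 (fun z => B1 * z) J2.
  rewrite /= in e1 e2; rewrite /n1 /r0; lra.
have coreI : q * D * n1 = - L * i0 + U * (A1 * B2 - B1 * A2).
  have e1 := congr1 (fun z => B1 * z) J1.
  have e2 := congr1 (fun z => A1 * z) J2.
  rewrite /= in e1 e2; rewrite /n1 /i0; lra.
exists (Y + T * D * n1), (X + 2 * (T0 * U0 * r0)), (Dv + T * D * n1).
have TDn : 0 <= T * D * n1 by rewrite mulr_ge0 // mulr_ge0 //; lra.
split.
  rewrite mulrDr EY.
  have -> : p * (T * D * n1) = T * (p * D * n1) by ring.
  rewrite coreR; have -> : T * (L * r0 + U * (A1 * A2 + B1 * B2)) = (T * L) * r0 + T * U * (A1 * A2 + B1 * B2) by ring.
  rewrite Hsym /r0; ring.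
split.
  rewrite mulrDr EI.
  have -> : q * (T * D * n1) = T * (q * D * n1) by ring.
  rewrite coreI; have -> : T * (- L * i0 + U * (A1 * B2 - B1 * A2)) = - ((T * L) * i0) + T * U * (A1 * B2 - B1 * A2) by ring.
  rewrite Hsym /i0; ring.
split; first by lra.
split; first by lra.
split.
  have key1 : 2 * s * r0 <= s ^+ 2 * n0 + n1.
    have := sqr_ge0 (s * A0 - A1); have := sqr_ge0 (s * B0 - B1); rewrite /n0 /n1 /r0; lra.
  have key2 : - (2 * s * r0) <= s ^+ 2 * n0 + n1.
    have := sqr_ge0 (s * A0 + A1); have := sqr_ge0 (s * B0 + B1); rewrite /n0 /n1 /r0; lra.
  have key : 2 * s * `|r0| <= s ^+ 2 * n0 + n1.
    case: (lerP 0 r0) => h; [rewrite ger0_norm //| rewrite ltr0_norm //]; lra.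
  have TU0 : 0 < T0 * U0 by apply: mulr_gt0.
  have nX : `|X + 2 * (T0 * U0 * r0)| <= `|X| + 2 * (T0 * U0 * `|r0|).
    apply: le_trans (ler_normD _ _) _.
    by rewrite normrM normrM (gtr0_norm TU0) ger0_norm.
  have k1 : (T0 * U0) * (2 * s * `|r0|) <= (T0 * U0) * (s ^+ 2 * n0 + n1).
    by apply: ler_wpM2l => //; apply: ltW.
  have k2 : T * L * n1 <= T * (s ^+ 2 * U) * n1.
    by apply: ler_wpM2r => //; apply: ler_wpM2l => //; apply: ltW.
  have k3 : T * U * n1 <= T * D * n1.
    by apply: ler_wpM2r => //; apply: ler_wpM2l => //; [apply: ltW | lra].
  have k4 : 0 <= T * U * n1 by rewrite mulr_ge0 // mulr_ge0 // ltW.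
  have HBs : s * `|X| + s * (s * T0 * U0 * n0) <= s * (2 * s * Dv).
    by rewrite -mulrDr ler_wpM2l // ltW.
  suff : s * (`|X + 2 * (T0 * U0 * r0)| + s * T * U * n1) <= s * (2 * s * (Dv + T * D * n1)).
    by rewrite ler_pM2l.
  have e1 : s * (`|X + 2 * (T0 * U0 * r0)| + s * T * U * n1) <= s * `|X| + (T0 * U0) * (2 * s * `|r0|) + s ^+ 2 * (T * U * n1).
    have : s * `|X + 2 * (T0 * U0 * r0)| <= s * (`|X| + 2 * (T0 * U0 * `|r0|)).
      by apply: ler_wpM2l => //; apply: ltW.
    move=> h; have -> : s * (`|X + 2 * (T0 * U0 * r0)| + s * T * U * n1) = s * `|X + 2 * (T0 * U0 * r0)| + s ^+ 2 * (T * U * n1) by ring.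
    have -> : s * `|X| + T0 * U0 * (2 * s * `|r0|) = s * (`|X| + 2 * (T0 * U0 * `|r0|)) by ring.
    lra.
  have e2 : (T0 * U0) * (s ^+ 2 * n0 + n1) = s * (s * T0 * U0 * n0) + T * L * n1.
    have -> : T * L * n1 = T0 * U0 * n1 by rewrite Hsym.
    ring.
  have e3 : T * (s ^+ 2 * U) * n1 = s ^+ 2 * (T * U * n1) by ring.
  have e4 : s * (2 * s * (Dv + T * D * n1)) = s * (2 * s * Dv) + 2 * s ^+ 2 * (T * D * n1) by ring.
  have k5 : s ^+ 2 * (T * U * n1) <= s ^+ 2 * (T * D * n1).
    by apply: ler_wpM2l; [exact: sqr_ge0 | exact: k3].
  rewrite e4; lra.
move=> DD i /andP[Hi1 Hi2].
have TD : 0 < T * D by apply: mulr_gt0 => //; lra.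
have Dv0 : Dv = 0 by lra.
have n10 : n1 = 0.
  have : T * D * n1 = 0 by lra.
  by move/eqP; rewrite mulf_eq0 gt_eqF //= => /eqP.
case: (ltngtP i k.+1) => [hlt|hgt|->]; last by [].
  by apply: HZ Dv0 _ _; rewrite Hi1 -ltnS.
by move: Hi2; rewrite leqNgt hgt.
Qed.

Lemma zero_prop (R : realFieldType) (m : nat) (f : nat -> R) :
  (forall k, 0 <= f k) -> (forall k, (k <= m)%N -> f k <= f k.+1) -> f m.+1 = 0 ->
  forall k, (k <= m.+1)%N -> f k = 0.
Proof.
move=> H0 Hle Hm k Hk.
have : forall j, (j <= m.+1)%N -> f (m.+1 - j)%N = 0.
  elim=> [|j IH] Hj; first by rewrite subn0.
  have Hj' : (j <= m.+1)%N by apply: ltnW.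
  have e : (m.+1 - j)%N = (m.+1 - j.+1).+1 by rewrite subnS prednK // subn_gt0.
  have := IH Hj'; rewrite e => h.
  have h2 : f (m.+1 - j.+1)%N <= 0 by rewrite -h; apply: Hle; lia.
  by apply/le_anti; rewrite H0 h2.
move/(_ (m.+1 - k)%N); rewrite subKn //; apply; exact: leq_subr.
Qed.

Lemma eig_real (R : realFieldType) (NL n : nat) (l d u t a b : nat -> R) (p q s : R) :
 0 < s ->
 (forall k, (0 < k <= n)%N -> 0 < t k /\ 0 <= l k /\ 0 < u k /\ l k + u k <= d k) ->
 (forall k, (NL.+1 < k <= n)%N -> t k * l k = t k.-1 * u k.-1 /\ l k <= s ^+ 2 * u k) ->
 a 0%N = 0 -> b 0%N = 0 -> a n.+1 = 0 -> b n.+1 = 0 ->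
 (forall k, (0 < k <= n)%N -> (k <= NL)%N ->
   - l k * a k.-1 + d k * a k - u k * a k.+1 = 0 /\
   - l k * b k.-1 + d k * b k - u k * b k.+1 = 0) ->
 ((NL < n)%N ->
  p * (d NL.+1 * a NL.+1 - l NL.+1 * a NL) - q * (d NL.+1 * b NL.+1 - l NL.+1 * b NL)
   = u NL.+1 * a NL.+2 /\
  q * (d NL.+1 * a NL.+1 - l NL.+1 * a NL) + p * (d NL.+1 * b NL.+1 - l NL.+1 * b NL)
   = u NL.+1 * b NL.+2) ->
 (forall k, (NL.+1 < k <= n)%N ->
    p * d k * a k - q * d k * b k = l k * a k.-1 + u k * a k.+1 /\
    q * d k * a k + p * d k * b k = l k * b k.-1 + u k * b k.+1) ->
 (exists i, (0 < i <= n)%N /\ a i ^+ 2 + b i ^+ 2 != 0) ->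
 q = 0 /\ p ^+ 2 <= 4 * s ^+ 2.
Proof.
move=> s0 Hc Hc2 a0 b0 an bn HL HF HJ [i0 [Hi0 Hnz]].
set m := minn NL n.
have HLm := @Lpart R m l d u a b a0 b0.
have Hc' : forall k, (0 < k <= m)%N -> 0 <= l k /\ 0 < u k /\ l k + u k <= d k.
  move=> k Hk; have Hk' : (0 < k <= n)%N by rewrite /m in Hk; lia.
  by have [_ H] := Hc k Hk'.
have HL' : forall k, (0 < k <= m)%N -> - l k * a k.-1 + d k * a k - u k * a k.+1 = 0 /\
                               - l k * b k.-1 + d k * b k - u k * b k.+1 = 0.
  move=> k Hk; apply: HL; rewrite /m in Hk; lia.
have {}HLm := HLm Hc' HL'.
have n2ge : forall k, 0 <= a k ^+ 2 + b k ^+ 2 by move=> k; nra.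
have Zp := @zero_prop R m (fun k => a k ^+ 2 + b k ^+ 2) n2ge
  (fun k hk => (HLm k hk).2.2).
case: (ltnP NL n) => Hn; last first.
  have em : m = n by rewrite /m; lia.
  exfalso; move: Hnz; rewrite Zp ?eqxx //; first by rewrite em an bn; ring.
  by rewrite em; lia.
have em : m = NL by rewrite /m; lia.
have hNL : (NL <= m)%N by rewrite em.
have [Hi [Hr _]] := HLm NL hNL.
have [F1 F2] := HF Hn.
have Hc3 : forall k, (NL < k <= n)%N -> 0 < t k /\ 0 <= l k /\ 0 < u k /\ l k + u k <= d k.
  move=> k Hk; apply: Hc; lia.
have := @Ipart R NL n l d u t a b p q s Hn s0 Hc3 Hc2 Hi Hr F1 F2 HJ (n - NL.+1)%N.
have e : (NL.+1 + (n - NL.+1))%N = n by lia.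
rewrite e leqnn => /(_ isT) [Y [X [D [EY [EI [DY [D0 [HB HZ]]]]]]]].
rewrite an bn !(mulr0, subr0, addr0) in EY EI.
have Dpos : 0 < D.
  rewrite lt_neqAle D0 andbT; apply/eqP => D00.
  have HZ' := HZ (esym D00).
  have z1 : a NL.+1 ^+ 2 + b NL.+1 ^+ 2 = 0 by apply: HZ'; lia.
  move: Hnz; case: (leqP i0 NL.+1) => hi.
    by rewrite Zp ?eqxx // em.
  by rewrite HZ' ?eqxx //; lia.
have Ypos : 0 < Y by apply: lt_le_trans DY.
split; first by move/eqP: EI; rewrite mulf_eq0 (gt_eqF Ypos) orbF => /eqP.
have HX : `|X| <= 2 * s * D.
  have : 0 <= s * t n * u n * (a n ^+ 2 + b n ^+ 2).
    have hn : (0 < n <= n)%N by lia.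
    have [ht [_ [hu _]]] := Hc n hn.
    by rewrite !mulr_ge0 // ltW.
  lra.
have Hp : `|p| * Y <= 2 * s * Y.
  rewrite -(gtr0_norm Ypos) -normrM EY (gtr0_norm Ypos).
  apply: le_trans HX _; rewrite ler_wpM2l //; nra.
have Hp' : `|p| <= 2 * s by rewrite -(ler_pM2r Ypos).
have : `|p| ^+ 2 <= (2 * s) ^+ 2.
  by rewrite ler_sqr // ?nnegrE // mulr_ge0 // ltW.
by rewrite real_normK ?num_real // exprMn; nra.
Qed.

Lemma sing_real (R : realFieldType) (NL n : nat) (l d u a : nat -> R) :
 (forall k, (0 < k <= n)%N -> 0 <= l k /\ 0 < u k /\ l k + u k <= d k) ->
 a 0%N = 0 -> a n.+1 = 0 ->
 (forall k, (0 < k <= n)%N -> (k <= NL.+1)%N -> - l k * a k.-1 + d k * a k - u k * a k.+1 = 0) ->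
 (forall k, (NL.+1 < k <= n)%N -> d k * a k - u k * a k.+1 = 0) ->
 forall k, (0 < k <= n)%N -> a k = 0.
Proof.
move=> Hc a0 an HL HJ.
have back : forall j, (NL.+2 <= n.+1 - j)%N -> a (n.+1 - j)%N = 0.
  elim=> [|j IH] Hj; first by rewrite subn0.
  have e : (n.+1 - j)%N = (n.+1 - j.+1).+1 by lia.
  have h1 : a (n.+1 - j)%N = 0 by apply: IH; lia.
  have hk : (NL.+1 < n.+1 - j.+1 <= n)%N by lia.
  have := HJ _ hk; rewrite -e h1 mulr0 subr0 => /eqP.
  have [hl [hu hd]] := Hc (n.+1 - j.+1)%N (ltac:(lia)).
  have dpos : 0 < d (n.+1 - j.+1)%N by lra.
  by rewrite mulf_eq0 gt_eqF //= => /eqP.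
have back' : forall k, (NL.+2 <= k <= n.+1)%N -> a k = 0.
  move=> k hk; have := back (n.+1 - k)%N; rewrite subKn; last by lia.
  by apply; lia.
set m := minn NL.+1 n.
have Hc' : forall k, (0 < k <= m)%N -> 0 <= l k /\ 0 < u k /\ l k + u k <= d k.
  by move=> k hk; apply: Hc; rewrite /m in hk; lia.
have HL' : forall k, (0 < k <= m)%N -> - l k * a k.-1 + d k * a k - u k * a k.+1 = 0 /\
      - l k * (fun _ => 0 : R) k.-1 + d k * (fun _ => 0 : R) k - u k * (fun _ => 0 : R) k.+1 = 0.
  move=> k hk; split; last by rewrite !mulr0 subr0 addr0.
  by apply: HL; rewrite /m in hk; lia.
have HLm := @Lpart R m l d u a (fun _ => 0) a0 erefl Hc' HL'.
have n2ge : forall k, 0 <= a k ^+ 2 + (fun _ => 0 : R) k ^+ 2 by move=> k /=; nra.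
have Zp := @zero_prop R m (fun k => a k ^+ 2 + (fun _ => 0 : R) k ^+ 2) n2ge
  (fun k hk => (HLm k hk).2.2).
have am : a m.+1 = 0.
  case: (leqP NL.+1 n) => h.
    have -> : m = NL.+1 by rewrite /m; lia.
    by apply: back'; lia.
  by have -> : m = n by rewrite /m; lia.
move=> k hk; case: (leqP k m.+1) => h.
  have Z0 : a m.+1 ^+ 2 + (fun _ => 0 : R) m.+1 ^+ 2 = 0 by rewrite am /=; ring.
  have := Zp Z0 k h; rewrite /= expr0n /= addr0 => /eqP.
  by rewrite sqrf_eq0 => /eqP.
by apply: back'; rewrite /m in h; lia.
Qed.
Definition vseq (K : pzRingType) (n : nat) (v : 'cV[K]_n) (k : nat) : K :=
  \sum_(j < n) (if (j.+1 == k)%N then v j 0 else 0).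
Arguments vseq {K n} v k.

Lemma vseqE (K : pzRingType) n (v : 'cV[K]_n) (j : 'I_n) : vseq v j.+1 = v j 0.
Proof.
rewrite /vseq (bigD1 j) //= eqxx big1 ?addr0 // => i /negPf ne.
rewrite eqSS; case: eqP => // h; case/eqP: ne; exact: val_inj.
Qed.

Lemma vseq0 (K : pzRingType) n (v : 'cV[K]_n) : vseq v 0 = 0.
Proof. by rewrite /vseq big1. Qed.

Lemma vseq_out (K : pzRingType) n (v : 'cV[K]_n) k : (n < k)%N -> vseq v k = 0.
Proof.
move=> h; rewrite /vseq big1 // => i _.
case: eqP => // e; move: (ltn_ord i); rewrite -ltnS e => h2.
by move: (leq_trans h2 h); rewrite ltnn.
Qed.

Lemma tri_row (K : pzRingType) n (B : 'M[K]_n) (v : 'cV[K]_n) (k : 'I_n)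
  (al be ga : K) :
  (forall j : 'I_n, B k j = if (j : nat) == (k : nat) then al
      else if (j.+1 == k)%N then be else if (j == k.+1 :> nat)%N then ga else 0) ->
  (B *m v) k 0 = be * vseq v k + al * vseq v k.+1 + ga * vseq v k.+2.
Proof.
move=> HB; rewrite mxE /vseq !mulr_sumr -!big_split /=.
apply: eq_bigr => j _; rewrite HB.
case E1: (j == k :> nat); case E2: (j.+1 == k)%N; case E3: (j == k.+1 :> nat)%N;
  rewrite /= ?eqSS ?E1 ?E2 ?E3 ?mulr0 ?mul0r ?addr0 ?add0r ?mulr1 //;
  move: E1 E2 E3 => /eqP E1 /eqP E2 /eqP E3; lia.
Qed.
Lemma unit_from_ker (F : fieldType) n (M : 'M[F]_n) :
  (forall v : 'cV[F]_n, M *m v = 0 -> v = 0) -> M \in unitmx.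
Proof.
move=> H; rewrite -unitmx_tr -row_free_unit -kermx_eq0; apply/eqP.
apply/row_matrixP => i; rewrite row0.
have h : row i (kermx M^T) *m M^T = 0 by rewrite -row_mul mulmx_ker row0.
have : M *m (row i (kermx M^T))^T = 0.
  by rewrite -[RHS]trmx0 -h trmx_mul trmxK.
by move/H => /(congr1 trmx); rewrite trmxK trmx0.
Qed.

Lemma right_eig (F : fieldType) n (g : 'M[F]_n) (a : F) :
  eigenvalue g a -> exists2 v : 'cV[F]_n, g *m v = a *: v & v != 0.
Proof.
move/eigenvalueP => [u Hu Hu0].
have nu : (g - a%:M) \notin unitmx.
  apply/negP => hU; move/negP: Hu0; apply.
  have : u *m (g - a%:M) = 0 by rewrite mulmxBr Hu mul_mx_scalar subrr.
  move/(congr1 (mulmx^~ (invmx (g - a%:M)))).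
  by rewrite -mulmxA mulmxV // mulmx1 mul0mx => ->.
move: nu; rewrite -unitmx_tr -row_free_unit -kermx_eq0 => /eqP hK.
have [i hi] : exists i, row i (kermx (g - a%:M)^T) != 0.
  case/boolP: [exists i, row i (kermx (g - a%:M)^T) != 0] => [/existsP//|/existsPn h].
  exfalso; apply: hK; apply/row_matrixP => i; rewrite row0; apply/eqP.
  by move: (h i); rewrite negbK.
exists (row i (kermx (g - a%:M)^T))^T; last by rewrite trmx_eq0.
apply/eqP; rewrite -subr_eq0 -mul_scalar_mx -mulmxBl.
have h : row i (kermx (g - a%:M)^T) *m (g - a%:M)^T = 0 by rewrite -row_mul mulmx_ker row0.
by apply/eqP; rewrite -[RHS]trmx0 -h trmx_mul trmxK.
Qed.
Lemma precME (R : realFieldType) NL NI (A : 'M[R]_(NL + NI)) (k j : 'I_(NL + NI)) :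
  precM A k j = if ((NL <= j) && (j < k))%N then 0 else A k j.
Proof.
rewrite /precM -[in RHS](submxK A).
have [k' Hk|k' Hk] := splitP k; have [j' Hj|j' Hj] := splitP j.
- have -> : k = lshift NI k' by apply: val_inj; rewrite /= Hk.
  have -> : j = lshift NI j' by apply: val_inj; rewrite /= Hj.
  by rewrite !block_mxEul /= leqNgt ltn_ord.
- have -> : k = lshift NI k' by apply: val_inj; rewrite /= Hk.
  have -> : j = rshift NL j' by apply: val_inj; rewrite /= Hj.
  rewrite !block_mxEur /= leq_addr /=.
  by rewrite ltnNge (leq_trans (ltnW (ltn_ord k')) (leq_addr _ _)).
- have -> : k = rshift NL k' by apply: val_inj; rewrite /= Hk.
  have -> : j = lshift NI j' by apply: val_inj; rewrite /= Hj.
  by rewrite !block_mxEdl /= leqNgt ltn_ord.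
- have -> : k = rshift NL k' by apply: val_inj; rewrite /= Hk.
  have -> : j = rshift NL j' by apply: val_inj; rewrite /= Hj.
  rewrite !block_mxEdr /= leq_addr ltn_add2l /upper_part mxE leqNgt.
  by case: (j' < k')%N.
Qed.

Definition lc (R : realFieldType) (eps : R) (x : nat -> R) (i : nat) : R :=
  eps / (meshw x i * meshwbar x i).
Definition uc (R : realFieldType) (eps : R) (x : nat -> R) (c : R -> R) (i : nat) : R :=
  eps / (meshw x i.+1 * meshwbar x i) + c (x i) / meshw x i.+1.
Definition dc (R : realFieldType) (eps : R) (x : nat -> R) (c r : R -> R) (i : nat) : R :=
  eps / meshwbar x i * ((meshw x i)^-1 + (meshw x i.+1)^-1) + c (x i) / meshw x i.+1 + r (x i).

Arguments lc {R}.
Arguments uc {R}.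
Arguments dc {R}.

Lemma upwindAE (R : realFieldType) n (eps : R) (x : nat -> R) (c r : R -> R) (k j : 'I_n) :
  upwindA n eps x c r k j = if (j : nat) == (k : nat) then dc eps x c r k.+1
      else if (j.+1 == k)%N then - lc eps x k.+1
      else if (j == k.+1 :> nat)%N then - uc eps x c k.+1 else 0.
Proof. by rewrite /upwindA mxE /lc /uc /dc opprD. Qed.

Lemma precMAE (R : realFieldType) NL NI (eps : R) (x : nat -> R) (c r : R -> R) (k j : 'I_(NL + NI)) :
  precM (upwindA (NL + NI) eps x c r) k j =
      if (j : nat) == (k : nat) then dc eps x c r k.+1
      else if (j.+1 == k)%N then (if (NL < k)%N then 0 else - lc eps x k.+1)
      else if (j == k.+1 :> nat)%N then - uc eps x c k.+1 else 0.
Proof.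
rewrite precME upwindAE.
case E1: (j == k :> nat); case E2: (j.+1 == k)%N; case E3: (j == k.+1 :> nat)%N;
  case E4: (NL <= j)%N; case E5: (j < k)%N; case E6: (NL < k)%N => //=;
  move: E1 E2 E3 E4 E5 E6; rewrite ?eqE /=; lia.
Qed.

Lemma xbounds (R : realFieldType) (N : nat) (x : nat -> R) :
  x 0%N = 0 -> x N = 1 -> (forall i, (i < N)%N -> x i < x i.+1) ->
  forall i, (i <= N)%N -> 0 <= x i <= 1.
Proof.
move=> x0 xN xi.
have mono : forall i j, (i <= j <= N)%N -> x i <= x j.
  move=> i; elim=> [|j IH] /andP[hij hjN].
    by move: hij; rewrite leqn0 => /eqP ->.
  case: (leqP i j) => h.
    apply: le_trans (IH _) (ltW (xi _ _)); lia.
  by have -> : i = j.+1 by lia.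
move=> i hi; rewrite -x0 -xN; apply/andP; split; apply: mono; lia.
Qed.

Lemma meshw_pos (R : realFieldType) (N : nat) (x : nat -> R) :
  (forall i, (i < N)%N -> x i < x i.+1) ->
  forall i, (0 < i <= N)%N -> 0 < meshw x i.
Proof.
move=> xi [|i] // /andP[_ h]; rewrite /meshw /= subr_gt0; apply: xi; lia.
Qed.

Lemma meshw0 (R : realFieldType) (x : nat -> R) : meshw x 0 = 0.
Proof. by rewrite /meshw subrr. Qed.

Lemma meshwbar_pos (R : realFieldType) (N : nat) (x : nat -> R) :
  (forall i, (i < N)%N -> x i < x i.+1) ->
  forall i, (i < N)%N -> 0 < meshwbar x i.
Proof.
move=> xi i hi; rewrite /meshwbar divr_gt0 //.
have h1 : 0 < meshw x i.+1 by apply: (@meshw_pos _ _ _ xi); lia.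
case: i hi h1 => [|i] hi h1; first by rewrite meshw0 add0r.
have h0 : 0 < meshw x i.+1 by apply: (@meshw_pos _ _ _ xi); lia.
by rewrite addr_gt0.
Qed.

Lemma dcE (R : realFieldType) (eps : R) (x : nat -> R) (c r : R -> R) i :
  dc eps x c r i = lc eps x i + uc eps x c i + r (x i).
Proof. rewrite /dc /lc /uc !invfM; ring. Qed.

Lemma lc_le (R : realFieldType) (eps Clo alpha Nr : R) (x : nat -> R) (c : R -> R) i :
 0 < eps -> 0 < Clo -> 0 < alpha -> 0 < Nr -> 0 < meshw x i -> 0 < meshw x i.+1 ->
 Clo <= c (x i) -> alpha / Nr <= meshw x i ->
 lc eps x i <= (2 * eps * Nr / (Clo * alpha)) * uc eps x c i.
Proof.
move=> e0 C0 a0 N0 h0 h10 Cc ha.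
rewrite /lc /uc; move: h0 h10 ha; rewrite /meshwbar.
set h := meshw x i; set h1 := meshw x i.+1; set cc := c (x i) => h0 h10 ha.
have cpos : 0 < cc by apply: lt_le_trans Cc.
have hb0 : 0 < (h + h1) / 2 by rewrite divr_gt0 // addr_gt0.
have P0 : 0 < h * ((h + h1) / 2) by apply: mulr_gt0.
have hh : 0 < h + h1 by apply: addr_gt0.
have Q0 : 0 < Clo * alpha * h1 by apply: mulr_gt0 => //; apply: mulr_gt0.
have step : eps / (h * ((h + h1) / 2)) <= (2 * eps * Nr / (Clo * alpha)) * (cc / h1).
  have E1 : eps / (h * ((h + h1) / 2)) = (eps * (Clo * alpha * h1)) / ((h * ((h + h1) / 2)) * (Clo * alpha * h1)).
    by field; rewrite !gt_eqF.
  have E2 : (2 * eps * Nr / (Clo * alpha)) * (cc / h1) = ((2 * eps * Nr * cc) * (h * ((h + h1) / 2))) / ((h * ((h + h1) / 2)) * (Clo * alpha * h1)).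
    by field; rewrite !gt_eqF.
  rewrite E1 E2 ler_pM2r; last by rewrite invr_gt0; apply: mulr_gt0.
  have aN : alpha <= h * Nr by rewrite -ler_pdivrMr.
  have key : eps * Clo * alpha * h1 <= eps * cc * (h * Nr) * (2 * ((h + h1) / 2)).
    have k1 : eps * Clo <= eps * cc by rewrite ler_pM2l.
    have k2 : eps * Clo * alpha <= eps * cc * (h * Nr).
      by apply: ler_pM; [rewrite mulr_ge0 ?ltW | exact: ltW | exact: k1 | exact: aN].
    have k3 : h1 <= 2 * ((h + h1) / 2) by rewrite mulrC divfK ?pnatr_eq0 //; lra.
    by apply: ler_pM; [rewrite !mulr_ge0 ?ltW | exact: ltW | exact: k2 | exact: k3].
  have -> : eps * (Clo * alpha * h1) = eps * Clo * alpha * h1 by ring.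
  by have -> : 2 * eps * Nr * cc * (h * ((h + h1) / 2)) = eps * cc * (h * Nr) * (2 * ((h + h1) / 2)) by ring.
apply: le_trans step _; apply: ler_wpM2l.
  by rewrite divr_ge0 ?mulr_ge0 ?ltW.
by rewrite lerDr divr_ge0 ?mulr_ge0 ?ltW // invr_gt0.
Qed.
Local Open Scope complex_scope.
Lemma compL (R : rcfType) (l d u : R) (z0 z1 z2 : R[i]) :
  - (l%:C) * z0 + d%:C * z1 - u%:C * z2 = 0 ->
  - l * complex.Re z0 + d * complex.Re z1 - u * complex.Re z2 = 0 /\
  - l * complex.Im z0 + d * complex.Im z1 - u * complex.Im z2 = 0.
Proof.
case: z0 => a0 b0; case: z1 => a1 b1; case: z2 => a2 b2.
move/eqP; rewrite eq_complex /= => /andP[/eqP h1 /eqP h2].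
split; lra.
Qed.

Lemma compF (R : rcfType) (l d u : R) (rho z0 z1 z2 : R[i]) :
  rho * (d%:C * z1 - l%:C * z0) = u%:C * z2 ->
  complex.Re rho * (d * complex.Re z1 - l * complex.Re z0) -
    complex.Im rho * (d * complex.Im z1 - l * complex.Im z0) = u * complex.Re z2 /\
  complex.Im rho * (d * complex.Re z1 - l * complex.Re z0) +
    complex.Re rho * (d * complex.Im z1 - l * complex.Im z0) = u * complex.Im z2.
Proof.
case: rho => p q; case: z0 => a0 b0; case: z1 => a1 b1; case: z2 => a2 b2.
move/eqP; rewrite eq_complex /= => /andP[/eqP h1 /eqP h2].
split; lra.
Qed.

Lemma compJ (R : rcfType) (l d u : R) (rho z0 z1 z2 : R[i]) :
  rho * (d%:C * z1) = l%:C * z0 + u%:C * z2 ->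
  complex.Re rho * d * complex.Re z1 - complex.Im rho * d * complex.Im z1 =
    l * complex.Re z0 + u * complex.Re z2 /\
  complex.Im rho * d * complex.Re z1 + complex.Re rho * d * complex.Im z1 =
    l * complex.Im z0 + u * complex.Im z2.
Proof.
case: rho => p q; case: z0 => a0 b0; case: z1 => a1 b1; case: z2 => a2 b2.
move/eqP; rewrite eq_complex /= => /andP[/eqP h1 /eqP h2].
split; lra.
Qed.

Lemma complex_sq_neq0 (R : rcfType) (z : R[i]) :
  z != 0 -> complex.Re z ^+ 2 + complex.Im z ^+ 2 != 0.
Proof.
case: z => a b; apply: contra => /eqP h; rewrite /= in h.
have ha : a = 0.
  have : a ^+ 2 = 0 by have := sqr_ge0 a; have := sqr_ge0 b; lra.
  by move/eqP; rewrite sqrf_eq0 => /eqP.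
have hb : b = 0.
  have : b ^+ 2 = 0 by have := sqr_ge0 a; have := sqr_ge0 b; lra.
  by move/eqP; rewrite sqrf_eq0 => /eqP.
by rewrite ha hb.
Qed.

Lemma lambda_form (R : rcfType) (p q : R) (lam : R[i]) :
  lam = 1 - (p +i* q) ^+ 2 -> q = 0 ->
  complex.Im lam = 0 /\ complex.Re lam = 1 - p ^+ 2.
Proof. move=> -> ->; rewrite expr2 /=; split; ring. Qed.
Local Close Scope complex_scope.

Fixpoint tw (R : fieldType) (f g : nat -> R) (k : nat) : R :=
  if k is k'.+1 then tw R f g k' * f k' / g k'.+1 else 1.
Arguments tw {R}.

Lemma mapC_if (R : rcfType) (b : bool) (y z : R) :
  real_complex R (if b then y else z) = if b then real_complex R y else real_complex R z.
Proof. by case: b. Qed.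

Ltac nlia :=
  repeat match goal with
  | H : is_true (@Order.le _ _ _ _) |- _ => clear H
  | H : is_true (@Order.lt _ _ _ _) |- _ => clear H
  | H : forall _, _ |- _ => clear H
  | H : is_true (_ != _) |- _ => clear H
  | H : @eq ?T _ _ |- _ => lazymatch T with nat => fail | _ => clear H end
  | H : _ = _ -> False |- _ => clear H
  | H : @eq ?T _ _ -> False |- _ => clear H
  end; lia.

Theorem theorem2p5 (R : rcfType) (NL NI N : nat)
    (eps Clo Chi alpha : R) (c r : R -> R) (x : nat -> R) (lambda : R[i]) :
  N = (NL + NI).+1 ->
  0 < eps <= 1 ->
  0 < Clo ->
  (forall t, 0 <= t <= 1 -> Clo <= c t <= Chi) ->
  (forall t, 0 <= t <= 1 -> 0 <= r t) ->
  x 0%N = 0 -> x N = 1 -> (forall i, (i < N)%N -> x i < x i.+1) ->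
  0 < alpha ->
  (forall i, (NL.+1 <= i <= N)%N -> alpha / N%:R <= meshw x i) ->
  let A := upwindA (NL + NI) eps x c r in
  let M := precM A in
  eigenvalue (map_mx (real_complex R) (invmx M *m A)) lambda ->
  complex.Im lambda = 0 /\ 1 - 8 * eps * N%:R / (Clo * alpha) <= complex.Re lambda <= 1.
Proof.
move=> HN /andP[e0 e1] C0 Hc Hr x0 xN xi a0 Hmesh A M Heig.
set n := (NL + NI)%N.
have en : n = (NL + NI)%N by [].
have xb := @xbounds R N x x0 xN xi.
have hp := @meshw_pos R N x xi.
have hbp := @meshwbar_pos R N x xi.
have Npos : (0 < N%:R :> R) by rewrite HN ltr0n.
set beta := 2 * eps * N%:R / (Clo * alpha).
have bpos : 0 < beta by rewrite /beta divr_gt0 ?mulr_gt0.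
set s := Num.sqrt beta.
have spos : 0 < s by rewrite /s sqrtr_gt0.
have s2 : s ^+ 2 = beta by rewrite /s sqr_sqrtr // ltW.
have cx : forall k, (k <= n)%N -> Clo <= c (x k).
  move=> k hk; have hk' : (k <= N)%N by nlia.
  by have /andP[] := Hc _ (xb k hk').
have rx : forall k, (k <= n)%N -> 0 <= r (x k).
  move=> k hk; have hk' : (k <= N)%N by nlia.
  exact: Hr _ (xb k hk').
have ucpos : forall k, (k <= n)%N -> 0 < uc eps x c k.
  move=> k hk; have h1 : 0 < meshw x k.+1 by apply: hp; nlia.
  have hb : 0 < meshwbar x k by apply: hbp; nlia.
  rewrite /uc; apply: addr_gt0; apply: divr_gt0 => //; first exact: mulr_gt0.
  exact: lt_le_trans C0 (cx k hk).
have lcpos : forall k, (0 < k <= n)%N -> 0 < lc eps x k.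
  move=> k hk; have h1 : 0 < meshw x k by apply: hp; nlia.
  have hb : 0 < meshwbar x k by apply: hbp; nlia.
  by rewrite /lc; apply: divr_gt0 => //; apply: mulr_gt0.
have coef : forall k, (0 < k <= n)%N ->
    0 <= lc eps x k /\ 0 < uc eps x c k /\ lc eps x k + uc eps x c k <= dc eps x c r k.
  move=> k hk; split; first exact: ltW (lcpos k hk).
  split; first by apply: ucpos; nlia.
  rewrite dcE lerDl; apply: rx; nlia.
have twpos : forall k, (k <= n)%N -> 0 < tw (uc eps x c) (lc eps x) k.
  elim=> [|k IH] hk //=.
  apply: divr_gt0; [apply: mulr_gt0; [apply: IH | apply: ucpos] | apply: lcpos]; nlia.
have twrel : forall k, (0 < k <= n)%N ->
    tw (uc eps x c) (lc eps x) k * lc eps x k =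
    tw (uc eps x c) (lc eps x) k.-1 * uc eps x c k.-1.
  case=> [//|k] hk /=; rewrite divfK // gt_eqF //; exact: lcpos.
have MU : M \in unitmx.
  apply: unit_from_ker => v Mv.
  have rowM : forall k : 'I_n,
      (if (NL < k)%N then 0 else - lc eps x k.+1) * vseq v k +
      dc eps x c r k.+1 * vseq v k.+1 + (- uc eps x c k.+1) * vseq v k.+2 = 0.
    move=> k; rewrite -(@tri_row _ _ M v k); first by rewrite Mv mxE.
    by move=> j; rewrite /M /A precMAE.
  have := @sing_real R NL n (lc eps x) (dc eps x c r) (uc eps x c) (vseq v) coef
    (@vseq0 _ _ v) (@vseq_out _ _ v _ (ltnSn n)).
  have HL : forall k, (0 < k <= n)%N -> (k <= NL.+1)%N ->
     - lc eps x k * vseq v k.-1 + dc eps x c r k * vseq v k - uc eps x c k * vseq v k.+1 = 0.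
    move=> k hk hk2; have hk' : (k.-1 < n)%N by nlia.
    have := rowM (Ordinal hk'); rewrite /= prednK; last by nlia.
    have -> : (NL < k.-1)%N = false by nlia.
    by move=> <-; ring.
  have HJ : forall k, (NL.+1 < k <= n)%N ->
     dc eps x c r k * vseq v k - uc eps x c k * vseq v k.+1 = 0.
    move=> k hk; have hk' : (k.-1 < n)%N by nlia.
    have := rowM (Ordinal hk'); rewrite /= prednK; last by nlia.
    have -> : (NL < k.-1)%N = true by nlia.
    by move=> <-; ring.
  move=> /(_ HL HJ) Z.
  apply/matrixP => i j; rewrite (ord1 j) mxE -vseqE; apply: Z; rewrite ltn0Sn /=; exact: ltn_ord.
have [w Hw w0] := @right_eig _ _ _ _ Heig.
rewrite map_mxM map_invmx in Hw.
set MC := map_mx (real_complex R) M in Hw.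
set AC := map_mx (real_complex R) A in Hw.
have MCU : MC \in unitmx by rewrite /MC map_unitmx.
have HAw : AC *m w = lambda *: (MC *m w).
  have := congr1 (mulmx MC) Hw.
  by rewrite !mulmxA mulmxV // mul1mx => ->; rewrite scalemxAr.
have rowC : forall k : 'I_n,
   real_complex R (- lc eps x k.+1) * vseq w k + real_complex R (dc eps x c r k.+1) * vseq w k.+1
     + real_complex R (- uc eps x c k.+1) * vseq w k.+2 =
   lambda * ((if (NL < k)%N then 0 else real_complex R (- lc eps x k.+1)) * vseq w k
     + real_complex R (dc eps x c r k.+1) * vseq w k.+1
     + real_complex R (- uc eps x c k.+1) * vseq w k.+2).
  move=> k.
  rewrite -(@tri_row _ _ AC w k); last first.
    by move=> j; rewrite /AC mxE /A upwindAE !mapC_if rmorph0.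
  rewrite -(@tri_row _ _ MC w k); last first.
    by move=> j; rewrite /MC mxE /M /A precMAE !mapC_if rmorph0.
  by rewrite HAw mxE.
have b8 : 4 * beta = 8 * eps * N%:R / (Clo * alpha) by rewrite /beta; ring.
have [->|lam1] := eqVneq lambda 1.
  split; first by [].
  rewrite /= lexx andbT -b8; lra.
set mu := 1 - lambda.
have mu0 : mu != 0 by rewrite /mu subr_eq0 eq_sym.
set rho := sqrtc mu.
have rho2 : rho ^+ 2 = mu by rewrite /rho sqr_sqrtc.
have rho0 : rho != 0.
  by apply: contra mu0 => /eqP h; rewrite -rho2 h expr0n.
set z := fun i => rho ^+ (maxn i NL.+1) * vseq w i.
have Hmain := @eig_real R NL n (lc eps x) (dc eps x c r) (uc eps x c)
   (tw (uc eps x c) (lc eps x)) (fun i => complex.Re (z i)) (fun i => complex.Im (z i))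
   (complex.Re rho) (complex.Im rho) s spos.
have H1 : forall k, (0 < k <= n)%N -> 0 < tw (uc eps x c) (lc eps x) k /\
    0 <= lc eps x k /\ 0 < uc eps x c k /\ lc eps x k + uc eps x c k <= dc eps x c r k.
  by move=> k hk; split; [apply: twpos; nlia | exact: coef k hk].
have H2 : forall k, (NL.+1 < k <= n)%N ->
    tw (uc eps x c) (lc eps x) k * lc eps x k =
    tw (uc eps x c) (lc eps x) k.-1 * uc eps x c k.-1 /\
    lc eps x k <= s ^+ 2 * uc eps x c k.
  move=> k hk; split; first by apply: twrel; nlia.
  rewrite s2; apply: lc_le => //.
  - by apply: hp; nlia.
  - by apply: hp; nlia.
  - by apply: cx; nlia.
  - by apply: Hmesh; nlia.
have zb0 : z 0%N = 0 by rewrite /z vseq0 mulr0.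
have zbn : z n.+1 = 0 by rewrite /z vseq_out ?mulr0.
have ra0 : complex.Re (z 0%N) = 0 by rewrite zb0.
have ib0 : complex.Im (z 0%N) = 0 by rewrite zb0.
have ran : complex.Re (z n.+1) = 0 by rewrite zbn.
have ibn : complex.Im (z n.+1) = 0 by rewrite zbn.
have {}Hmain := Hmain H1 H2 ra0 ib0 ran ibn.
have HL : forall k, (0 < k <= n)%N -> (k <= NL)%N ->
   - lc eps x k * complex.Re (z k.-1) + dc eps x c r k * complex.Re (z k)
      - uc eps x c k * complex.Re (z k.+1) = 0 /\
   - lc eps x k * complex.Im (z k.-1) + dc eps x c r k * complex.Im (z k)
      - uc eps x c k * complex.Im (z k.+1) = 0.
  move=> i hi hiNL; apply: compL.
  have hk : (i.-1 < n)%N by nlia.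
  have R0 := rowC (Ordinal hk).
  rewrite [nat_of_ord _]/= prednK in R0; last by nlia.
  rewrite (_ : (NL < i.-1)%N = false) in R0; last by nlia.
  move: R0.
  set T := (X in X = lambda * _).
  move=> R0.
  have T0 : T = 0.
    have : mu * T = 0 by rewrite /mu mulrBl mul1r {1}R0 subrr.
    by move/eqP; rewrite mulf_eq0 (negbTE mu0) /= => /eqP.
  have em1 : maxn i.-1 NL.+1 = NL.+1 by apply/maxn_idPr; nlia.
  have em2 : maxn i NL.+1 = NL.+1 by apply/maxn_idPr; nlia.
  have em3 : maxn i.+1 NL.+1 = NL.+1 by apply/maxn_idPr; nlia.
  rewrite /z em1 em2 em3.
  rewrite -[RHS](mulr0 (rho ^+ NL.+1)) -T0 /T !rmorphN; ring.
have HF : (NL < n)%N ->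
  complex.Re rho * (dc eps x c r NL.+1 * complex.Re (z NL.+1) - lc eps x NL.+1 * complex.Re (z NL))
   - complex.Im rho * (dc eps x c r NL.+1 * complex.Im (z NL.+1) - lc eps x NL.+1 * complex.Im (z NL))
   = uc eps x c NL.+1 * complex.Re (z NL.+2) /\
  complex.Im rho * (dc eps x c r NL.+1 * complex.Re (z NL.+1) - lc eps x NL.+1 * complex.Re (z NL))
   + complex.Re rho * (dc eps x c r NL.+1 * complex.Im (z NL.+1) - lc eps x NL.+1 * complex.Im (z NL))
   = uc eps x c NL.+1 * complex.Im (z NL.+2).
  move=> hn; apply: compF.
  have R0 := rowC (Ordinal hn).
  rewrite [nat_of_ord _]/= ltnn in R0.
  move: R0.
  set T := (X in X = lambda * _).
  move=> R0.
  have T0 : T = 0.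
    have : mu * T = 0 by rewrite /mu mulrBl mul1r {1}R0 subrr.
    by move/eqP; rewrite mulf_eq0 (negbTE mu0) /= => /eqP.
  have em1 : maxn NL NL.+1 = NL.+1 by apply/maxn_idPr; nlia.
  have em2 : maxn NL.+1 NL.+1 = NL.+1 by rewrite maxnn.
  have em3 : maxn NL.+2 NL.+1 = NL.+2 by apply/maxn_idPl; nlia.
  rewrite /z em1 em2 em3; apply/eqP; rewrite -subr_eq0; apply/eqP.
  rewrite -[RHS](mulr0 (rho ^+ NL.+2)) -T0 /T !rmorphN !exprS; ring.
have HJ : forall k, (NL.+1 < k <= n)%N ->
  complex.Re rho * dc eps x c r k * complex.Re (z k) - complex.Im rho * dc eps x c r k * complex.Im (z k)
   = lc eps x k * complex.Re (z k.-1) + uc eps x c k * complex.Re (z k.+1) /\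
  complex.Im rho * dc eps x c r k * complex.Re (z k) + complex.Re rho * dc eps x c r k * complex.Im (z k)
   = lc eps x k * complex.Im (z k.-1) + uc eps x c k * complex.Im (z k.+1).
  case=> [//|j] hj; apply: compJ.
  have hk : (j < n)%N by nlia.
  have R0 := rowC (Ordinal hk).
  rewrite [nat_of_ord _]/= in R0.
  rewrite (_ : (NL < j)%N = true) in R0; last by nlia.
  have em1 : maxn j NL.+1 = j by apply/maxn_idPl; nlia.
  have em2 : maxn j.+1 NL.+1 = j.+1 by apply/maxn_idPl; nlia.
  have em3 : maxn j.+2 NL.+1 = j.+2 by apply/maxn_idPl; nlia.
  rewrite /z em1 em2 em3 /=; apply/eqP; rewrite -subr_eq0; apply/eqP.
  move: R0; set v0 := vseq w j; set v1 := vseq w j.+1; set v2 := vseq w j.+2 => R0.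
  set S := real_complex R (dc eps x c r j.+1) * v1 - real_complex R (uc eps x c j.+1) * v2.
  have E : rho * (real_complex R (dc eps x c r j.+1) * (rho ^+ j.+1 * v1)) -
     (real_complex R (lc eps x j.+1) * (rho ^+ j * v0) +
      real_complex R (uc eps x c j.+1) * (rho ^+ j.+2 * v2)) =
     rho ^+ j * (rho ^+ 2 * S - real_complex R (lc eps x j.+1) * v0).
    by rewrite /S !exprS; ring.
  rewrite E rho2 /mu.
  have -> : (1 - lambda) * S - real_complex R (lc eps x j.+1) * v0 =
     (real_complex R (- lc eps x j.+1) * v0 + real_complex R (dc eps x c r j.+1) * v1 +
      real_complex R (- uc eps x c j.+1) * v2) -
     lambda * (0 * v0 + real_complex R (dc eps x c r j.+1) * v1 +
      real_complex R (- uc eps x c j.+1) * v2).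
    by rewrite /S !rmorphN; ring.
  by rewrite R0 subrr mulr0.
have HNZ : exists i, (0 < i <= n)%N /\
    complex.Re (z i) ^+ 2 + complex.Im (z i) ^+ 2 != 0.
  have [j hj] : exists j : 'I_n, w j 0 != 0.
    case/boolP: [exists j : 'I_n, w j 0 != 0] => [/existsP //| /existsPn h].
    exfalso; move/negP: w0; apply; apply/eqP/matrixP => i k.
    by rewrite (ord1 k) mxE; move: (h i); rewrite negbK => /eqP.
  exists j.+1; split; first by rewrite ltn_ord.
  by apply: complex_sq_neq0; rewrite /z vseqE mulf_neq0 // expf_neq0.
have [hq hpp] := Hmain HL HF HJ HNZ.
have elam : lambda = 1 - (Complex (complex.Re rho) (complex.Im rho)) ^+ 2.
  have -> : Complex (complex.Re rho) (complex.Im rho) = rho by case: (rho).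
  by rewrite rho2 /mu; ring.
have [hIm hRe] := @lambda_form _ _ _ _ elam hq.
split => //; rewrite hRe; apply/andP; split.
  by rewrite -b8 -s2; lra.
by have := sqr_ge0 (complex.Re rho); lra.
Qed.
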